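(* Let $n\geq 2$ and let $C$ be a $2$-null CRC in $G_n$ with covering radius $\rho\geq 2$, $c_1\leq 2$, $c_2=3$, and $\mathbf{0}\in C$. Then: (1) every cap contains at most one word of $C$; in particular $C$ contains at most $2n$ words of type $3100$; (2) every word of type $1100$ lying in $C_2$ is at distance two from exactly one word of weight four in $C$, and this word is of type $3100$.
   Context: $G_n$: vertex set $\mathbb{Z}^n$, $x\sim y$ iff $\sum_i|x_i-y_i|=1$; $d$ its distance; weight of $x$ is $d(x,\mathbf{0})$; $e_i$ is the $i$-th unit vector. For a code $C$ with covering radius $\rho$, $C_i=\{v:d(v,C)=i\}$. $C$ is a CRC if for all $i,j$ every vertex of $C_i$ has the same number $\alpha_{ij}$ of neighbours in $C_j$, with $\alpha_{ij}=0$ for $|i-j|>1$; $a_i=\alpha_{ii}$, $b_i=\alpha_{i,i+1}$, $c_i=\alpha_{i,i-1}$. $C$ is $r$-null if $a_0=\cdots=a_{r-1}=0$. The type of a word of weight at most four is the nonincreasing sequence of its four largest absolute entry values; type $1100$: exactly two entries $\pm1$, others $0$; type $3100$: one entry $\pm3$, one entry $\pm1$, others $0$. A cap is one of the $2n$ sets $\{\varepsilon 3e_i\pm e_j: j\in\{1,\ldots,n\}\setminus\{i\}\}$ for $i\in\{1,\ldots,n\}$, $\varepsilon\in\{1,-1\}$; the set of type $3100$ words is the disjoint union of the caps. *)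

(* Defs.v *)
From HB Require Import structures.
From mathcomp Require Import all_boot all_order all_algebra.
From mathcomp Require Import boolp.
Set Implicit Arguments. Unset Strict Implicit. Unset Printing Implicit Defensive.
Import Order.TTheory GRing.Theory Num.Theory.
Local Open Scope ring_scope.

(* Vertices of G_n : Z^n *)
Definition vec (n : nat) := {ffun 'I_n -> int}.

Definition unitv (n : nat) (i : 'I_n) : vec n := [ffun k => if k == i then 1 else 0].

Definition step (n : nat) (x : vec n) (i : 'I_n) (b : bool) : vec n :=
  if b then x + unitv i else x - unitv i.

(* graph distance of G_n (l1 distance) *)
Definition dist (n : nat) (x y : vec n) : nat := (\sum_(i < n) absz (x i - y i))%N.

Definition weight (n : nat) (x : vec n) : nat := dist x 0.

Definition code (n : nat) := vec n -> Prop.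

(* d(x, C) = i, i.e. x \in C_i *)
Definition in_layer (n : nat) (C : code n) (i : nat) (x : vec n) : Prop :=
  (exists c, C c /\ dist x c = i) /\ (forall c, C c -> (i <= dist x c)%N).

Definition covering_radius (n : nat) (C : code n) (rho : nat) : Prop :=
  (forall x, exists c, C c /\ (dist x c <= rho)%N) /\ (exists x, in_layer C rho x).

Definition nbr_count (n : nat) (C : code n) (j : nat) (x : vec n) : nat :=
  #|[set p : 'I_n * bool | `[< in_layer C j (step x p.1 p.2) >]]|.

Definition is_CRC (n : nat) (C : code n) (rho : nat) (alpha : nat -> nat -> nat) : Prop :=
  covering_radius C rho /\
  (forall i j x, (i <= rho)%N -> (j <= rho)%N -> in_layer C i x -> nbr_count C j x = alpha i j) /\
  (forall i j, (i <= rho)%N -> (j <= rho)%N -> (i.+1 < j)%N || (j.+1 < i)%N -> alpha i j = 0%N).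

Definition a_ (alpha : nat -> nat -> nat) (i : nat) : nat := alpha i i.
Definition b_ (alpha : nat -> nat -> nat) (i : nat) : nat := alpha i i.+1.
Definition c_ (alpha : nat -> nat -> nat) (i : nat) : nat := alpha i i.-1.

Definition r_null (alpha : nat -> nat -> nat) (r : nat) : Prop :=
  forall i, (i < r)%N -> a_ alpha i = 0%N.

Definition type1100 (n : nat) (x : vec n) : Prop :=
  exists i j : 'I_n, i != j /\ `|x i| = 1 /\ `|x j| = 1 /\
    (forall k, k != i -> k != j -> x k = 0).

Definition type3100 (n : nat) (x : vec n) : Prop :=
  exists i j : 'I_n, i != j /\ `|x i| = 3 /\ `|x j| = 1 /\
    (forall k, k != i -> k != j -> x k = 0).

Definition cap (n : nat) (i : 'I_n) (b : bool) : vec n -> Prop :=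
  fun x => exists (j : 'I_n) (s : bool), j != i /\
    x = step [ffun k => (if b then 3 else -3) * unitv i k] j s.

(* Main.v *)
Require Import Defs.
From HB Require Import structures.
From mathcomp Require Import all_boot all_order all_algebra.
From mathcomp Require Import boolp.
From mathcomp Require Import zify.
Set Implicit Arguments. Unset Strict Implicit. Unset Printing Implicit Defensive.
Import Order.TTheory GRing.Theory Num.Theory.
Local Open Scope ring_scope.

Definition sgn (b : bool) : int := if b then 1 else -1.

Lemma stepE n (v : vec n) i b k :
  step v i b k = v k + (if k == i then sgn b else 0).
Proof.
rewrite /step /unitv /sgn; case: b; rewrite !ffunE; case: (k == i) => //=;
  by rewrite ?addr0 ?subr0.
Qed.

Lemma step_comm n (v : vec n) i b j c :
  step (step v i b) j c = step (step v j c) i b.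
Proof. apply/ffunP => k; rewrite !stepE; by rewrite addrAC. Qed.

Lemma stepK n (v : vec n) i b : step (step v i b) i (~~ b) = v.
Proof.
apply/ffunP => k; rewrite !stepE; case: (k == i); rewrite ?addr0 //.
by case: b; rewrite /sgn /= -addrA ?subrr ?addr0 // addNr addr0.
Qed.

Lemma stepK' n (v : vec n) i b : step (step v i (~~ b)) i b = v.
Proof. by rewrite -{2}(negbK b) stepK. Qed.

Lemma distvv n (v : vec n) : dist v v = 0%N.
Proof. by rewrite /dist big1 // => i _; rewrite subrr. Qed.

Lemma dist_sym n (u v : vec n) : dist u v = dist v u.
Proof. rewrite /dist; apply: eq_bigr => i _; by rewrite -abszN opprB. Qed.

Lemma dist_tri n (u v w : vec n) : (dist u w <= dist u v + dist v w)%N.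
Proof.
rewrite /dist -big_split /=; apply: leq_sum => i _; lia.
Qed.

Lemma dist0 n (u v : vec n) : dist u v = 0%N -> u = v.
Proof.
move=> /eqP; rewrite /dist sum_nat_eq0 => /forallP H; apply/ffunP => i.
move: (H i) => /implyP /(_ isT) /eqP /eqP; by rewrite absz_eq0 subr_eq0 => /eqP.
Qed.

Lemma sgn_neq0 b : sgn b != 0. Proof. by case: b. Qed.

Lemma dist_step n (v : vec n) i b : dist (step v i b) v = 1%N.
Proof.
rewrite /dist (bigD1 i) //= big1 => [|k kn]; rewrite !stepE ?eqxx.
  by case: b; rewrite /sgn /= addrAC subrr.
by rewrite (negbTE kn) addr0 subrr.
Qed.

Lemma dist_step' n (v : vec n) i b : dist v (step v i b) = 1%N.
Proof. by rewrite dist_sym dist_step. Qed.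

Lemma walk n (x z : vec n) d : dist x z = d.+1 -> exists i b, dist (step x i b) z = d.
Proof.
move=> H.
have [i Hi] : exists i, x i != z i.
  apply/existsP; apply: contraT => /existsPn Hn.
  suff : dist x z = 0%N by rewrite H.
  by rewrite /dist big1 // => i _; move: (Hn i) => /negPn /eqP ->; rewrite subrr.
exists i, (x i < z i).
move: H; rewrite /dist => H; rewrite (bigD1 i) //= stepE eqxx.
move: H; rewrite (bigD1 i) //=.
have -> : (\sum_(k < n | k != i) absz (step x i (x i < z i) k - z k)%R =
          \sum_(k < n | k != i) absz (x k - z k)%R)%N.
  by apply: eq_bigr => k kn; rewrite stepE (negbTE kn) addr0.
move: (\sum_(k < n | k != i) absz (x k - z k)%R)%N => S.
move: Hi; case: ltrP; rewrite /sgn => H1 /eqP H2; lia.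
Qed.

Lemma dist1 n (x z : vec n) : dist x z = 1%N -> exists i b, z = step x i b.
Proof. by move=> /walk [i [b /dist0 H]]; exists i, b. Qed.

Lemma dist2 n (x z : vec n) : dist x z = 2%N ->
  exists i b j c, z = step (step x i b) j c.
Proof.
move=> /walk [i [b /dist1 [j [c H]]]]; by exists i, b, j, c.
Qed.

Lemma weight_step_le n (v : vec n) i b : (weight (step v i b) <= (weight v).+1)%N.
Proof.
rewrite /weight; have := dist_tri (step v i b) v 0; rewrite dist_step; lia.
Qed.

Lemma weight0 n : weight (0 : vec n) = 0%N.
Proof. exact: distvv. Qed.

Lemma weight_step_out n (v : vec n) i b : 0 <= v i * sgn b ->
  weight (step v i b) = (weight v).+1.
Proof.
move=> H; rewrite /weight /dist (bigD1 i) //= [in RHS](bigD1 i) //= stepE eqxx.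
have -> : (\sum_(k < n | k != i) absz (step v i b k - (0 : vec n) k)%R =
          \sum_(k < n | k != i) absz (v k - (0 : vec n) k)%R)%N.
  by apply: eq_bigr => k kn; rewrite stepE (negbTE kn) addr0.
move: (\sum_(k < n | k != i) absz (v k - (0 : vec n) k)%R)%N => S.
rewrite ffunE subr0 subr0; move: H; case: b; rewrite /sgn ?mulr1 ?mulrN1; lia.
Qed.

Record Hyp n (C : code n) (alpha : nat -> nat -> nat) : Prop := {
  hn : (2 <= n)%N;
  h0 : C 0;
  hcnt : forall i j x, (i <= 2)%N -> (j <= 2)%N -> in_layer C i x -> nbr_count C j x = alpha i j;
  ha0 : alpha 0 0 = 0%N;
  ha1 : alpha 1 1 = 0%N;
  hc1 : (alpha 1 0 <= 2)%N;
  hc2 : alpha 2 1 = 3%N }.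

Definition NS n (C : code n) j (v : vec n) :=
  [set p : 'I_n * bool | `[< in_layer C j (step v p.1 p.2) >]].

Lemma NSP n (C : code n) j v p : p \in NS C j v <-> in_layer C j (step v p.1 p.2).
Proof. by rewrite inE; split => [/asboolP|H]; [|apply/asboolP]. Qed.

Lemma card_ge (T : finType) (A : {set T}) (s : seq T) :
  uniq s -> (forall x, x \in s -> x \in A) -> (size s <= #|A|)%N.
Proof.
move=> Us Hs; rewrite -(card_uniqP Us); apply: subset_leq_card; apply/subsetP => x.
exact: Hs.
Qed.

Lemma layer_uniq n (C : code n) i j v : in_layer C i v -> in_layer C j v -> i = j.
Proof.
move=> [[c [Cc Dc]] Hi] [[d [Cd Dd]] Hj].
have := Hi d Cd; have := Hj c Cc; rewrite Dc Dd; lia.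
Qed.

Lemma L_C0 n (C : code n) c : C c -> in_layer C 0 c.
Proof. by move=> Cc; split; [exists c; rewrite distvv|]. Qed.

Lemma L_C0' n (C : code n) v : in_layer C 0 v -> C v.
Proof. by move=> [[c [Cc /dist0 ->]] _]. Qed.

Section X. End X.

Lemma cnt n (C : code n) alpha i j v : Hyp C alpha -> (i <= 2)%N -> (j <= 2)%N ->
  in_layer C i v -> #|NS C j v| = alpha i j.
Proof. by move=> H hi hj hv; rewrite -(hcnt H hi hj hv). Qed.

Lemma L_nbrC n (C : code n) alpha c i b : Hyp C alpha -> C c -> ~ C (step c i b).
Proof.
move=> H Cc Cs.
suff : (size [:: (i, b)] <= 0)%N by [].
rewrite -(ha0 H) -(cnt (i:=0) (j:=0) H isT isT (L_C0 Cc)).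
apply: card_ge => // x; rewrite inE => /eqP ->.
by apply/NSP; apply: L_C0.
Qed.

Lemma L_C1 n (C : code n) alpha v i b : Hyp C alpha -> C (step v i b) -> in_layer C 1 v.
Proof.
move=> H Cs.
have nCv : ~ C v by rewrite -(stepK v i b); exact: (L_nbrC H Cs).
split; first by exists (step v i b); rewrite dist_step'.
move=> c Cc; case E: (dist v c) => //; by move: E => /dist0 E; subst.
Qed.

Lemma L_a1 n (C : code n) alpha u i b : Hyp C alpha -> in_layer C 1 u ->
  ~ in_layer C 1 (step u i b).
Proof.
move=> H Hu Hs.
suff : (size [:: (i, b)] <= 0)%N by [].
rewrite -(ha1 H) -(cnt (i:=1) (j:=1) H isT isT Hu).
apply: card_ge => // x; rewrite inE => /eqP ->.
exact/NSP.
Qed.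

Lemma L_C2 n (C : code n) alpha v i b : Hyp C alpha -> ~ C v ->
  in_layer C 1 (step v i b) -> (weight v <= 2)%N -> in_layer C 2 v.
Proof.
move=> H nCv H1 Hw.
have Hge : forall c, C c -> (2 <= dist v c)%N.
  move=> c Cc; case E: (dist v c) => [|[|//]].
  - by move: E => /dist0 E; subst.
  - move: E => /dist1 [j [d E]]; subst.
    have Hv := L_C1 H Cc.
    by have := @L_a1 _ _ _ _ i (~~ b) H H1; rewrite stepK.
split=> //; exists 0; split; first exact: h0 H.
have := Hge 0 (h0 H); move: Hw; rewrite /weight; lia.
Qed.

Lemma L_three (T : finType) (A : {set T}) a b c d :
  #|A| = 3%N -> a \in A -> b \in A -> c \in A -> uniq [:: a; b; c] -> d \in A ->
  d = a \/ d = b \/ d = c.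
Proof.
move=> HA Ha Hb Hc U Hd.
case: (eqVneq d a) => [->|da]; first by left.
case: (eqVneq d b) => [->|db]; first by right; left.
case: (eqVneq d c) => [->|dc]; first by right; right.
have U' : uniq [:: d; a; b; c].
  by move: U; rewrite /= !inE (negbTE da) (negbTE db) (negbTE dc).
suff : (size [:: d; a; b; c] <= 3)%N by [].
rewrite -HA; apply: card_ge => // x; by rewrite !inE => /or4P [] /eqP ->.
Qed.

Lemma L_two (T : finType) (A : {set T}) a b d :
  (#|A| <= 2)%N -> a \in A -> b \in A -> a != b -> d \in A -> d = a \/ d = b.
Proof.
move=> HA Ha Hb U Hd.
case: (eqVneq d a) => [->|da]; first by left.
case: (eqVneq d b) => [->|db]; first by right.
have U' : uniq [:: d; a; b].
  by rewrite /= !inE (negbTE da) (negbTE db) U.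
suff : (size [:: d; a; b] <= 2)%N by [].
apply: leq_trans HA; apply: card_ge => // x; by rewrite !inE => /or3P [] /eqP ->.
Qed.

Lemma L_exists3 (T : finType) (A : {set T}) a b :
  #|A| = 3%N -> a \in A -> b \in A -> exists c, c \in A /\ c != a /\ c != b.
Proof.
move=> HA Ha Hb.
have : (0 < #|A :\ a :\ b|)%N.
  have := cardsD1 b (A :\ a); have := cardsD1 a A; rewrite HA Ha.
  case: (b \in A :\ a); lia.
move=> /card_gt0P [c]; rewrite !inE => /and3P [cb ca cA]; by exists c.
Qed.

Lemma L_exists2 (T : finType) (A : {set T}) a :
  #|A| = 2%N -> a \in A -> exists c, c \in A /\ c != a.
Proof.
move=> HA Ha.
have : (0 < #|A :\ a|)%N by have := cardsD1 a A; rewrite HA Ha; lia.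
move=> /card_gt0P [c]; rewrite !inE => /andP [ca cA]; by exists c.
Qed.

Lemma L_twoin (T : finType) (A : {set T}) a b :
  #|A| = 2%N -> (forall d, d \in A -> d = a \/ d = b) -> a \in A.
Proof.
move=> HA Hd; apply: contraT => Ha.
have : (#|A| <= 1)%N.
  have -> : A = A :&: [set b].
    apply/setP => x; rewrite !inE; case E: (x \in A) => //=.
    case: (Hd x E) => Ex; subst x; [by rewrite E in Ha|by rewrite eqxx].
  by rewrite -(cards1 b); apply: subset_leq_card; apply: subsetIr.
by rewrite HA.
Qed.

Lemma nbb b : (~~ b == b) = false. Proof. by case: b. Qed.
Lemma bnb b : (b == ~~ b) = false. Proof. by case: b. Qed.

Ltac uq := rewrite /= ?inE ?xpair_eqE ?eqxx ?nbb ?bnb /=;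
  repeat match goal with H : is_true (?a != ?b) |- _ =>
     rewrite ?(negbTE H) ?(eq_sym b a) ?(negbTE H) ?andbF ?andbT ?orbF ?orbT /=; move: H end;
  intros; rewrite ?nbb ?bnb ?andbF ?andbT ?orbF ?orbT //=.

Lemma L_C1' n (C : code n) alpha v i b : Hyp C alpha -> C v -> in_layer C 1 (step v i b).
Proof. by move=> H Cv; apply: (L_C1 (i := i) (b := ~~ b) H); rewrite stepK. Qed.

Lemma wt2 n (i j : 'I_n) b c : (weight (step (step (0%R : vec n) i b) j c) <= 2)%N.
Proof.
have := weight_step_le (step 0 i b) j c; have := weight_step_le (0 : vec n) i b.
rewrite weight0; lia.
Qed.

Lemma other n (i : 'I_n) : (2 <= n)%N -> exists k : 'I_n, k != i.
Proof.
move=> hn.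
have h0 : (0 < n)%N by lia. have h1 : (1 < n)%N by lia.
case: (eqVneq (val i) 0%N) => Hi.
- exists (Ordinal h1); apply/eqP => E; move: Hi; rewrite -E /=; lia.
- exists (Ordinal h0); apply/eqP => E; move: Hi; rewrite -E /=; lia.
Qed.

Lemma c1_two n (C : code n) alpha u p q : Hyp C alpha -> in_layer C 1 u -> p != q ->
  C (step u p.1 p.2) -> C (step u q.1 q.2) -> alpha 1 0 = 2%N.
Proof.
move=> H u1 pq Cp Cq; apply/eqP; rewrite eqn_leq (hc1 H) /=.
rewrite -(cnt (i:=1) (j:=0) H isT isT u1).
apply: (card_ge (s := [:: p; q])) => [|x]; first by rewrite /= inE pq.
by rewrite !inE => /orP [] /eqP ->; apply/asboolP; apply: L_C0.
Qed.

Lemma no3 n (C : code n) alpha u p q r : Hyp C alpha -> in_layer C 1 u ->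
  uniq [:: p; q; r] ->
  C (step u p.1 p.2) -> C (step u q.1 q.2) -> C (step u r.1 r.2) -> False.
Proof.
move=> H u1 U Cp Cq Cr.
suff : (size [:: p; q; r] <= 2)%N by [].
apply: leq_trans (hc1 H); rewrite -(cnt (i:=1) (j:=0) H isT isT u1).
apply: card_ge => // x; rewrite !inE => /or3P [] /eqP ->; apply/asboolP; exact: L_C0.
Qed.

Lemma inNS n (C : code n) j v i b : in_layer C j (step v i b) -> (i, b) \in NS C j v.
Proof. by move=> h; apply/NSP. Qed.

Lemma lemA n (C : code n) alpha i e : Hyp C alpha -> ~ C (step (step 0 i e) i e).
Proof.
move=> H Cc.
have [k ki] := other i (hn H).
set u := step 0 i e.
have u1 : in_layer C 1 u := L_C1' i e H (h0 H).
have Cu0 : C (step u i (~~ e)) by rewrite stepK; exact: h0 H.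
have c12 : alpha 1 0 = 2%N.
  by apply: (c1_two (p := (i, ~~ e)) (q := (i, e)) H u1) => //; uq.
have claim : forall s, C (step (step 0 k s) i (~~ e)).
  move=> s; set x := step u k s.
  have nCx : ~ C x.
    move=> Cx; apply: (no3 (p := (i, ~~ e)) (q := (i, e)) (r := (k, s)) H u1) => //; uq.
  have x2 : in_layer C 2 x.
    apply: (L_C2 (i := k) (b := ~~ s) H nCx); first by rewrite stepK.
    exact: wt2.
  have N3 : #|NS C 1 x| = 3%N by rewrite (cnt (i:=2) (j:=1) H isT isT x2) (hc2 H).
  have m1 : (k, ~~ s) \in NS C 1 x by apply: inNS; rewrite stepK.
  have m2 : (i, ~~ e) \in NS C 1 x.
    by apply: inNS; rewrite /x /u step_comm stepK; apply: L_C1' H (h0 H).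
  have m3 : (i, e) \in NS C 1 x.
    by apply: inNS; rewrite /x step_comm; apply: L_C1' H Cc.
  have ks1 : in_layer C 1 (step 0 k s) := L_C1' k s H (h0 H).
  have N2 : #|NS C 0 (step 0 k s)| = 2%N by rewrite (cnt (i:=1) (j:=0) H isT isT ks1).
  have m0 : (k, ~~ s) \in NS C 0 (step 0 k s).
    by apply: inNS; rewrite stepK; apply: L_C0; exact: h0 H.
  have [p [pin pne]] := L_exists2 N2 m0.
  have Cw : C (step (step 0 k s) p.1 p.2) := L_C0' (proj1 (NSP C 0 _ p) pin).
  have px : p \in NS C 1 x.
    apply/NSP; have -> : x = step (step 0 k s) i e by rewrite /x /u step_comm.
    by rewrite step_comm; apply: L_C1' H Cw.
  have U : uniq [:: (k, ~~ s); (i, ~~ e); (i, e)] by uq.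
  case: (L_three N3 m1 m2 m3 U px) => [E|[E|E]].
  - by rewrite E eqxx in pne.
  - by rewrite E in Cw.
  - exfalso; apply: nCx; rewrite E /= in Cw; by rewrite /x /u step_comm.
have v1 : in_layer C 1 (step 0 i (~~ e)) := L_C1' i (~~ e) H (h0 H).
apply: (no3 (p := (i, e)) (q := (k, true)) (r := (k, false)) H v1).
- uq.
- by rewrite stepK'; exact: h0 H.
- by rewrite step_comm; apply: claim.
- by rewrite step_comm; apply: claim.
Qed.

Lemma sgnN b : sgn (~~ b) = - sgn b. Proof. by case: b. Qed.

Ltac vec_eq := apply/ffunP => ?; rewrite !stepE ?sgnN ?ffunE;
  repeat (case: eqP => ?; subst); rewrite ?eqxx //=; lia.

Lemma sat n (C : code n) alpha u p q r : Hyp C alpha -> in_layer C 1 u ->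
  C (step u p.1 p.2) -> C (step u q.1 q.2) -> p != q -> C (step u r.1 r.2) -> r = p \/ r = q.
Proof.
move=> H u1 Cp Cq pq Cr.
apply: (L_two (A := NS C 0 u)) => //; try (apply/NSP; exact: L_C0).
by rewrite (cnt (i:=1) (j:=0) H isT isT u1) (hc1 H).
Qed.

Lemma penum n (k m : 'I_n) a b (p : 'I_n * bool) : (p.1 == k) || (p.1 == m) ->
  p = (k, a) \/ p = (k, ~~ a) \/ p = (m, b) \/ p = (m, ~~ b).
Proof.
case: p => l d /= /orP [] /eqP ->; case: d; case: a; case: b; 
  do ?[by left | right]; by [].
Qed.

Lemma B1 n (C : code n) alpha k a m b l g p : Hyp C alpha ->
  C (step (step 0 k a) m b) -> k != m -> l != k -> l != m ->
  p != (l, ~~ g) -> C (step (step 0 l g) p.1 p.2) -> p = (k, ~~ a).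
Proof.
move=> H Cw km lk lm pne Cw'.
set u := step 0 k a.
have u1 : in_layer C 1 u := L_C1' k a H (h0 H).
have Cu0 : C (step u (k, ~~ a).1 (k, ~~ a).2) by rewrite stepK; exact: h0 H.
set x := step u l g.
have nCx : ~ C x.
  by move=> Cx; apply: (no3 (p := (k, ~~ a)) (q := (m, b)) (r := (l, g)) H u1); uq.
have x2 : in_layer C 2 x.
  apply: (L_C2 (i := l) (b := ~~ g) H nCx); first by rewrite stepK.
  exact: wt2.
have N3 : #|NS C 1 x| = 3%N by rewrite (cnt (i:=2) (j:=1) H isT isT x2) (hc2 H).
have m1 : (l, ~~ g) \in NS C 1 x by apply: inNS; rewrite stepK.
have m2 : (k, ~~ a) \in NS C 1 x.
  by apply: inNS; rewrite /x /u step_comm stepK; apply: L_C1' H (h0 H).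
have m3 : (m, b) \in NS C 1 x.
  by apply: inNS; rewrite /x step_comm; apply: L_C1' H Cw.
have px : p \in NS C 1 x.
  apply/NSP; have -> : x = step (step 0 l g) k a by rewrite /x /u step_comm.
  by rewrite step_comm; apply: L_C1' H Cw'.
have U : uniq [:: (l, ~~ g); (k, ~~ a); (m, b)] by uq.
case: (L_three N3 m1 m2 m3 U px) => [E|[E|E]] //.
- by rewrite E eqxx in pne.
- exfalso; rewrite E in Cw'.
  have v1 : in_layer C 1 (step 0 m b) := L_C1' m b H (h0 H).
  apply: (no3 (p := (m, ~~ b)) (q := (k, a)) (r := (l, g)) H v1).
  + uq.
  + by rewrite stepK; exact: h0 H.
  + by rewrite step_comm.
  + by rewrite step_comm.
Qed.

Lemma lemB n (C : code n) alpha k a m b : Hyp C alpha -> k != m ->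
  ~ C (step (step 0 k a) m b).
Proof.
move=> H km Cw.
set u := step 0 k a.
have u1 : in_layer C 1 u := L_C1' k a H (h0 H).
have Cu0 : C (step u (k, ~~ a).1 (k, ~~ a).2) by rewrite stepK; exact: h0 H.
have Cuw : C (step u (m, b).1 (m, b).2) by [].
have pq : (k, ~~ a) != (m, b) by uq.
have c12 : alpha 1 0 = 2%N by apply: (c1_two (p := (k, ~~ a)) (q := (m, b)) H u1).
case: (boolP [exists l, (l != k) && (l != m)]).
  move=> /existsP [l /andP [lk lm]].
  have g1 : in_layer C 1 (step 0 l true) := L_C1' l true H (h0 H).
  have N2 : #|NS C 0 (step 0 l true)| = 2%N by rewrite (cnt (i:=1) (j:=0) H isT isT g1).
  have m0 : (l, false) \in NS C 0 (step 0 l true).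
    by apply: inNS; rewrite (stepK _ l true); apply: L_C0; exact: h0 H.
  have [p [pin pne]] := L_exists2 N2 m0.
  have Cw' : C (step (step 0 l true) p.1 p.2) := L_C0' (proj1 (NSP C 0 _ p) pin).
  have E1 := B1 (g := true) H Cw km lk lm pne Cw'.
  have mk : m != k by rewrite eq_sym.
  have Cw2 : C (step (step 0 m b) k a) by rewrite step_comm.
  have E2 := B1 (g := true) H Cw2 (mk : m != k) lm lk pne Cw'.
  by move: km; rewrite E1 in E2; case: E2 => ->; rewrite eqxx.
move=> /existsPn Hl.
have Hp : forall p : 'I_n * bool, (p.1 == k) || (p.1 == m).
  by move=> p; move: (Hl p.1); rewrite negb_and !negbK.
have sat_u := sat H u1 Cu0 Cuw pq.
set Q1 := step u m (~~ b).
have nCQ1 : ~ C Q1.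
  move=> CQ; have CQ' : C (step u (m, ~~ b).1 (m, ~~ b).2) := CQ.
  case: (sat_u (m, ~~ b) CQ') => E; have /= E1 := f_equal fst E; have /= E2 := f_equal snd E.
  - by rewrite E1 eqxx in km.
  - by move: E2; case: (b).
have Q12 : in_layer C 2 Q1.
  by apply: (L_C2 (i := m) (b := b) H nCQ1); [rewrite stepK' | exact: wt2].
set P1 := step Q1 k a.
case: (pselect (in_layer C 1 P1)) => P1in.
- set Q0 := step u k a.
  have nCQ0 : ~ C Q0 := lemA (i := k) (e := a) H.
  have Q02 : in_layer C 2 Q0.
    by apply: (L_C2 (i := k) (b := ~~ a) H nCQ0); [rewrite stepK | exact: wt2].
  have N2 : #|NS C 0 P1| = 2%N by rewrite (cnt (i:=1) (j:=0) H isT isT P1in).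
  have : (k, a) \in NS C 0 P1.
    apply: (L_twoin (b := (m, ~~ b)) N2) => d /NSP /L_C0' Cd.
    case: (penum a b (Hp d)) => [->|[E|[E|->]]]; [by left| | |by right]; exfalso.
    + by apply: nCQ1; rewrite E /P1 stepK in Cd.
    + by apply: nCQ0; rewrite E /P1 /Q1 /Q0 /= step_comm stepK' in Cd.
  move=> /NSP /L_C0' CR.
  suff : (size [:: (k, ~~ a); (m, b); (m, ~~ b); (k, a)] <= 3)%N by [].
  rewrite -(hc2 H) -(cnt (i:=2) (j:=1) H isT isT Q02).
  apply: card_ge; first by uq.
  move=> d; rewrite !inE => /or4P [] /eqP -> /=; apply/asboolP.
  + by rewrite /Q0 stepK.
  + by rewrite /Q0 step_comm; apply: L_C1' H Cw.
  + by rewrite /Q0 step_comm.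
  + apply: (L_C1 (i := m) (b := ~~ b) H).
    by rewrite /Q0 step_comm (step_comm u) -/Q1 -/P1.
- have N3 : #|NS C 1 Q1| = 3%N by rewrite (cnt (i:=2) (j:=1) H isT isT Q12) (hc2 H).
  have m1 : (m, b) \in NS C 1 Q1 by apply: inNS; rewrite stepK'.
  have m2 : (k, ~~ a) \in NS C 1 Q1.
    by apply: inNS; rewrite /Q1 /u step_comm stepK; apply: L_C1' H (h0 H).
  have [p [pin [pm pk]]] := L_exists3 N3 m1 m2.
  have P2in : in_layer C 1 (step Q1 m (~~ b)).
    case: (penum a b (Hp p)) => [E|[E|[E|E]]]; rewrite E in pin pm pk.
    + by move/NSP: pin.
    + by rewrite eqxx in pk.
    + by rewrite eqxx in pm.
    + by move/NSP: pin.
  have N2 : #|NS C 0 (step Q1 m (~~ b))| = 2%N by rewrite (cnt (i:=1) (j:=0) H isT isT P2in).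
  have : (k, a) \in NS C 0 (step Q1 m (~~ b)).
    apply: (L_twoin (b := (m, ~~ b)) N2) => d /NSP /L_C0' Cd.
    case: (penum a b (Hp d)) => [->|[E|[E|->]]]; [by left| | |by right]; exfalso.
    + apply: (lemA (i := m) (e := ~~ b) H); rewrite E /= in Cd; move: Cd.
      have -> : step (step Q1 m (~~ b)) k (~~ a) = step (step 0 m (~~ b)) m (~~ b) by rewrite /Q1 /u; vec_eq.
      by [].
    + by apply: nCQ1; rewrite E /= stepK' in Cd.
  move=> /NSP /L_C0' CR.
  apply: P1in; apply: (L_C1 (i := m) (b := ~~ b) H).
  by rewrite /P1 step_comm.
Qed.

Lemma claimK n (C : code n) alpha i j s t p0 p1 : Hyp C alpha -> i != j ->
  in_layer C 2 (step (step 0 i s) j t) ->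
  p0 \in NS C 1 (step (step 0 i s) j t) -> p0 != (i, ~~ s) -> p0 != (j, ~~ t) ->
  C (step (step (step (step 0 i s) j t) p0.1 p0.2) p1.1 p1.2) ->
  p1 = p0 /\ (p0 = (i, s) \/ p0 = (j, t)).
Proof.
move=> H ij x2 p0in p0i p0j Cc.
set x := step (step 0 i s) j t in x2 p0in Cc.
have ji : j != i by rewrite eq_sym.
have N3 : #|NS C 1 x| = 3%N by rewrite (cnt (i:=2) (j:=1) H isT isT x2) (hc2 H).
have e1 : step x i (~~ s) = step 0 j t by rewrite /x step_comm stepK.
have e2 : step x j (~~ t) = step 0 i s by rewrite /x stepK.
have m1 : (i, ~~ s) \in NS C 1 x by apply: inNS; rewrite e1; apply: L_C1' H (h0 H).
have m2 : (j, ~~ t) \in NS C 1 x by apply: inNS; rewrite e2; apply: L_C1' H (h0 H).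
have p1in : p1 \in NS C 1 x.
  by apply/NSP; apply: (L_C1 (i := p0.1) (b := p0.2) H); rewrite step_comm.
have U : uniq [:: (i, ~~ s); (j, ~~ t); p0].
  rewrite /= !inE !negb_or (eq_sym _ p0) p0i (eq_sym _ p0) p0j /= !andbT; uq.
case: (L_three N3 m1 m2 (inNS (proj1 (NSP _ _ _ _) p0in)) U p1in) => [E|[E|E]].
- exfalso; rewrite E /= step_comm e1 in Cc.
  move: p0 p0in p0i p0j Cc {U} => [l d] _ /= p0i p0j Cc.
  case: (eqVneq l j) => [E'|lj].
  + subst l; case: (eqVneq d t) => [E'|dt].
    * subst d; exact: (lemA H Cc).
    * by move: p0j; rewrite (_ : d = ~~ t) ?eqxx //; move: dt; case: (d); case: (t).
  + by apply: (lemB (k := j) (m := l) H _ Cc); rewrite eq_sym.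
- exfalso; rewrite E /= step_comm e2 in Cc.
  move: p0 p0in p0i p0j Cc {U} => [l d] _ /= p0i p0j Cc.
  case: (eqVneq l i) => [E'|li].
  + subst l; case: (eqVneq d s) => [E'|ds].
    * subst d; exact: (lemA H Cc).
    * by move: p0i; rewrite (_ : d = ~~ s) ?eqxx //; move: ds; case: (d); case: (s).
  + by apply: (lemB (k := i) (m := l) H _ Cc); rewrite eq_sym.
- split; first by rewrite E; case: (p0).
  rewrite E /= in Cc.
  move: p0 p0in p0i p0j Cc {U p1in E} => [l d] p0in /= p0i p0j Cc.
  case: (eqVneq l i) => [E'|li].
    subst l; left; case: (eqVneq d s) => [->//|ds].
    by move: p0i; rewrite (_ : d = ~~ s) ?eqxx //; move: ds; case: (d); case: (s).
  case: (eqVneq l j) => [E'|lj].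
    subst l; right; case: (eqVneq d t) => [->//|dt].
    by move: p0j; rewrite (_ : d = ~~ t) ?eqxx //; move: dt; case: (d); case: (t).
  exfalso.
  set y := step (step 0 i s) l d.
  have nCy : ~ C y by apply: (lemB H); rewrite eq_sym.
  have y2 : in_layer C 2 y.
    apply: (L_C2 (i := l) (b := ~~ d) H nCy); last exact: wt2.
    by rewrite /y stepK; apply: L_C1' H (h0 H).
  suff : (size [:: (l, ~~ d); (i, ~~ s); (j, t); (l, d)] <= 3)%N by [].
  rewrite -(hc2 H) -(cnt (i:=2) (j:=1) H isT isT y2).
  apply: card_ge; first by uq.
  move=> e; rewrite !inE => /or4P [] /eqP -> /=; apply/asboolP.
  + by rewrite /y stepK; apply: L_C1' H (h0 H).
  + by rewrite /y step_comm stepK; apply: L_C1' H (h0 H).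
  + by rewrite /y step_comm -/x; move/NSP: p0in.
  + apply: (L_C1 (i := j) (b := t) H); move: Cc.
    have -> : step (step y l d) j t = step (step x l d) l d by rewrite /y /x; vec_eq.
    by [].
Qed.

Lemma abs1 (z : int) : `|z| = 1 -> z = sgn (0 < z).
Proof. rewrite /sgn; case: ltrP => h; lia. Qed.

Lemma abs3 (z : int) : `|z| = 3 -> z = (if 0 < z then 3 else -3).
Proof. case: ltrP => h; lia. Qed.

Lemma t1100 n (x : vec n) : type1100 x ->
  exists i j s t, i != j /\ x = step (step 0 i s) j t.
Proof.
move=> [i [j [ij [hi [hj hk]]]]]; exists i, j, (0 < x i), (0 < x j); split => //.
have ji : j != i by rewrite eq_sym.
apply/ffunP => k; rewrite !stepE ffunE.
case: (eqVneq k i) => [->|ki]; first by rewrite (negbTE ij) add0r addr0; apply: abs1.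
case: (eqVneq k j) => [->|kj]; first by rewrite !add0r; apply: abs1.
by rewrite !addr0; apply: hk.
Qed.

Lemma capE n (i : 'I_n) b :
  [ffun k => (if b then 3 else -3) * unitv i k] = step (step (step 0 i b) i b) i b.
Proof.
apply/ffunP => k; rewrite !ffunE !stepE ffunE; case: (k == i); case: b; rewrite /sgn; lia.
Qed.

Lemma t3100 n (x : vec n) : type3100 x -> exists i b, cap i b x.
Proof.
move=> [i [j [ij [hi [hj hk]]]]]; exists i, (0 < x i), j, (0 < x j); split.
  by rewrite eq_sym.
apply/ffunP => k; rewrite stepE !ffunE.
case: (eqVneq k i) => [->|ki]; first by rewrite (negbTE ij) mulr1 addr0; apply: abs3.
case: (eqVneq k j) => [->|kj]; first by rewrite mulr0 add0r; apply: abs1.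
by rewrite mulr0 add0r; apply: hk.
Qed.

Lemma partA n (C : code n) alpha i b x y : Hyp C alpha ->
  cap i b x -> cap i b y -> C x -> C y -> x = y.
Proof.
move=> H [j [s [ji ->]]] [j' [s' [j'i ->]]]; rewrite capE => Cx Cy.
case: (pselect (step (step (step (step 0 i b) i b) i b) j s =
                step (step (step (step 0 i b) i b) i b) j' s')) => // nxy.
exfalso.
set D := step (step 0 i b) i b in Cx Cy nxy.
have nCD : ~ C D := lemA H.
have D2 : in_layer C 2 D.
  apply: (L_C2 (i := i) (b := ~~ b) H nCD); last exact: wt2.
  by rewrite /D stepK; apply: L_C1' H (h0 H).
have pq : (j, s) != (j', s').
  by apply/eqP => E; case: E => E1 E2; subst; apply: nxy.
suff : (size [:: (i, ~~ b); (i, b); (j, s); (j', s')] <= 3)%N by [].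
rewrite -(hc2 H) -(cnt (i:=2) (j:=1) H isT isT D2).
apply: card_ge.
  rewrite /= !inE !negb_or pq /= !andbT; uq.
move=> e; rewrite !inE => /or4P [] /eqP -> /=; apply/asboolP.
+ by rewrite /D stepK; apply: L_C1' H (h0 H).
+ exact: (L_C1 H Cx).
+ by apply: (L_C1 (i := i) (b := b) H); rewrite step_comm.
+ by apply: (L_C1 (i := i) (b := b) H); rewrite step_comm.
Qed.

Lemma Y3 n (i j : 'I_n) s t : i != j ->
  type3100 (step (step (step (step 0 i s) j t) i s) i s) /\
  weight (step (step (step (step 0 i s) j t) i s) i s) = 4%N.
Proof.
move=> ij; have ji : j != i by rewrite eq_sym.
split.
  exists i, j; split => //; split; first by rewrite !stepE eqxx (negbTE ij) ffunE; case: (s).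
  split; first by rewrite !stepE eqxx (negbTE ji) ffunE; case: (t).
  by move=> k ki kj; rewrite !stepE (negbTE ki) (negbTE kj) ffunE.
rewrite weight_step_out; last by rewrite !stepE eqxx (negbTE ij) ffunE; case: (s).
rewrite weight_step_out; last by rewrite !stepE eqxx (negbTE ij) ffunE; case: (s).
rewrite weight_step_out; last by rewrite !stepE (negbTE ji) ffunE; case: (t).
by rewrite weight_step_out ?weight0 // ffunE mul0r.
Qed.

Theorem mainTheorem4 (n : nat) (C : code n) (rho : nat) (alpha : nat -> nat -> nat) :
  (2 <= n)%N ->
  is_CRC C rho alpha ->
  r_null alpha 2 ->
  (2 <= rho)%N ->
  (c_ alpha 1 <= 2)%N ->
  c_ alpha 2 = 3%N ->
  C 0 ->
  ((forall (i : 'I_n) (b : bool) (x y : vec n),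
       cap i b x -> cap i b y -> C x -> C y -> x = y) /\
   (forall s : seq (vec n), uniq s ->
       (forall x, x \in s -> C x /\ type3100 x) -> (size s <= 2 * n)%N)) /\
  (forall x : vec n, type1100 x -> in_layer C 2 x ->
     exists y : vec n,
       (C y /\ weight y = 4%N /\ dist x y = 2%N) /\ type3100 y /\
       (forall z, C z -> weight z = 4%N -> dist x z = 2%N -> z = y)).
Proof.
move=> hn0 [_ [hcnt0 _]] hnull hrho hc1' hc2' C0.
have H : Hyp C alpha.
  split => //.
  - move=> i j x hi hj hx; apply: hcnt0 => //; [exact: leq_trans hi hrho|exact: leq_trans hj hrho].
  - exact: (hnull 0%N).
  - exact: (hnull 1%N).
split; [split|].
- move=> i b x y; exact: partA H.
- move=> sq Us Hs.
  have h0n : (0 < n)%N by move: hn0; lia.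
  pose d0 : 'I_n := Ordinal h0n.
  pose f x := odflt (d0, true) [pick p : 'I_n * bool | `[< cap p.1 p.2 x >]].
  have fP : forall x, x \in sq -> cap (f x).1 (f x).2 x.
    move=> x xs; have [_ /t3100 [i [b Hc]]] := Hs x xs.
    rewrite /f; case: pickP => [p /asboolP //|/(_ (i, b))].
    by rewrite /= (asboolT Hc).
  have finj : {in sq &, injective f}.
    move=> x y xs ys E.
    apply: (partA (i := (f x).1) (b := (f x).2) H).
    + exact: fP.
    + rewrite E; exact: fP.
    + exact: (Hs x xs).1.
    + exact: (Hs y ys).1.
  rewrite -(size_map f) mulnC.
  have := card_ge (A := [set: 'I_n * bool]) (s := map f sq).
  rewrite cardsT card_prod !card_ord card_bool; apply.
    by rewrite map_inj_in_uniq.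
  by move=> ? _; rewrite inE.
move=> x0 /t1100 [i [j [s [t [ij Ex]]]]] x2; subst x0.
set x := step (step 0 i s) j t in x2 *.
have N3 : #|NS C 1 x| = 3%N by rewrite (cnt (i:=2) (j:=1) H isT isT x2) (hc2 H).
have e1 : step x i (~~ s) = step 0 j t by rewrite /x step_comm stepK.
have e2 : step x j (~~ t) = step 0 i s by rewrite /x stepK.
have m1 : (i, ~~ s) \in NS C 1 x by apply: inNS; rewrite e1; apply: L_C1' H (h0 H).
have m2 : (j, ~~ t) \in NS C 1 x by apply: inNS; rewrite e2; apply: L_C1' H (h0 H).
have [p0 [p0in [p0i p0j]]] := L_exists3 N3 m1 m2.
have q1 : in_layer C 1 (step x p0.1 p0.2) by move/NSP: p0in.
have K := claimK H ij x2 p0in p0i p0j.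
have [[c [Cc /dist1 [i' [b' Ec]]]] _] := q1.
subst c.
have [E' P0] := K (i', b') Cc.
set y := step (step x p0.1 p0.2) p0.1 p0.2.
have Cy : C y.
  have -> : y = step (step x p0.1 p0.2) i' b' by rewrite /y -E'.
  exact: Cc.
exists y.
have [Ty Wy] : type3100 y /\ weight y = 4%N.
  rewrite /y /x; case: P0 => -> /=.
  - exact: Y3.
  - rewrite step_comm; apply: Y3; by rewrite eq_sym.
split; [split; [exact: Cy|split; [exact: Wy|]]|split; [exact: Ty|]].
- apply/eqP; rewrite eqn_leq; apply/andP; split.
  + have := dist_tri x (step x p0.1 p0.2) y; rewrite /y !dist_step'; lia.
  + by case: x2 => _ /(_ y Cy).
- move=> z Cz wz /dist2 [i1 [b1 [i2 [b2 Ez]]]].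
  have U : uniq [:: (i, ~~ s); (j, ~~ t); p0].
    rewrite /= !inE !negb_or (eq_sym _ p0) p0i (eq_sym _ p0) p0j /= !andbT; uq.
  have pin : (i1, b1) \in NS C 1 x.
    by apply: inNS; apply: (L_C1 (i := i2) (b := b2) H); rewrite -Ez.
  case: (L_three N3 m1 m2 (inNS q1) U pin) => E.
  + exfalso; move: wz; rewrite Ez; case: E => -> ->; rewrite e1.
    by have := wt2 j i2 t b2; lia.
  case: E => E.
  + exfalso; move: wz; rewrite Ez; case: E => -> ->; rewrite e2.
    by have := wt2 i i2 s b2; lia.
  have Ez' : z = step (step x p0.1 p0.2) i2 b2 by rewrite Ez; case: E => -> ->.
  have Cz' : C (step (step x p0.1 p0.2) (i2, b2).1 (i2, b2).2) by rewrite -Ez'.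
  have [E2 _] := K (i2, b2) Cz'.
  by rewrite Ez' /y -E2.
Qed.
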